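(* Let $(L,[\cdot,\cdot],\alpha)$ be a Hom-Lie algebra over a field $F$ and let $\mu:L\to[0,1]$ be a fuzzy subset of $L$. Then the following are equivalent: (i) $\mu$ is a fuzzy Hom-Lie ideal of $L$; (ii) for every $t\in\mathrm{Im}(\mu)$ such that the strong upper level set $U(\mu^>,t)=\{x\in L:\mu(x)>t\}$ is nonempty, $U(\mu^>,t)$ is a Hom-Lie ideal of $L$.
   Context: A Hom-Lie algebra over $F$ is a triple $(L,[\cdot,\cdot],\alpha)$ with $L$ an $F$-vector space, $\alpha:L\to L$ linear and $[\cdot,\cdot]:L\times L\to L$ bilinear, such that $[x,y]=-[y,x]$ and $[\alpha(x),[y,z]]+[\alpha(y),[z,x]]+[\alpha(z),[x,y]]=0$ for all $x,y,z\in L$. A Hom-Lie subalgebra is a subspace $H$ with $\alpha(H)\subseteq H$ and $[x,y]\in H$ for all $x,y\in H$; it is a Hom-Lie ideal if moreover $[x,y]\in H$ for all $x\in H$, $y\in L$. A fuzzy subset of $L$ is a map $\mu:L\to[0,1]$. Writing $a\wedge b=\min\{a,b\}$, $a\vee b=\max\{a,b\}$, $\mu$ is a fuzzy Hom-Lie ideal if for all $x,y\in L$, $c\in F$: $\mu(x+y)\ge\mu(x)\wedge\mu(y)$, $\mu(cx)\ge\mu(x)$, $\mu([x,y])\ge\mu(x)\vee\mu(y)$, and $\mu(\alpha(x))\ge\mu(x)$. *)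

(* Defs.v *)
From HB Require Import structures.
From mathcomp Require Import all_boot all_order all_algebra.
From mathcomp Require Import reals.
Set Implicit Arguments. Unset Strict Implicit. Unset Printing Implicit Defensive.
Import Order.TTheory GRing.Theory Num.Theory.
Local Open Scope ring_scope.

Section HomLie.
Variables (F : fieldType) (L : lmodType F).

Definition is_HomLie (br : L -> L -> L) (alpha : L -> L) : Prop :=
  [/\ (forall (a : F) (x y z : L), br (a *: x + y) z = a *: br x z + br y z),
      (forall (a : F) (x y z : L), br x (a *: y + z) = a *: br x y + br x z),
      (forall (a : F) (x y : L), alpha (a *: x + y) = a *: alpha x + alpha y),
      (forall x y : L, br x y = - br y x) &
      (forall x y z : L,
         br (alpha x) (br y z) + br (alpha y) (br z x) + br (alpha z) (br x y) = 0)].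

Definition is_subspace (H : L -> Prop) : Prop :=
  [/\ H 0,
      (forall x y, H x -> H y -> H (x + y)) &
      (forall (c : F) x, H x -> H (c *: x))].

Definition is_HomLie_ideal (br : L -> L -> L) (alpha : L -> L) (H : L -> Prop) : Prop :=
  [/\ is_subspace H,
      (forall x, H x -> H (alpha x)) &
      (forall x y, H x -> H (br x y))].

Variable R : realType.

Definition is_fuzzy_subset (mu : L -> R) : Prop := forall x, 0 <= mu x <= 1.

Definition is_fuzzy_HomLie_ideal (br : L -> L -> L) (alpha : L -> L) (mu : L -> R) : Prop :=
  [/\ (forall x y, Num.min (mu x) (mu y) <= mu (x + y)),
      (forall (c : F) x, mu x <= mu (c *: x)),
      (forall x y, Num.max (mu x) (mu y) <= mu (br x y)) &
      (forall x, mu x <= mu (alpha x))].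

Definition strong_upper_level (mu : L -> R) (t : R) : L -> Prop := fun x => t < mu x.

End HomLie.

(* Main.v *)
Require Import Defs.
From HB Require Import structures.
From mathcomp Require Import all_boot all_order all_algebra.
From mathcomp Require Import reals.
Import Order.TTheory GRing.Theory Num.Theory.
Local Open Scope ring_scope.

Theorem theorem4p4 (F : fieldType) (L : lmodType F) (br : L -> L -> L)
  (alpha : L -> L) (R : realType) (mu : L -> R) :
  is_HomLie br alpha -> is_fuzzy_subset mu ->
  (is_fuzzy_HomLie_ideal br alpha mu <->
   (forall t : R, (exists x0, mu x0 = t) ->
      (exists x, strong_upper_level mu t x) ->
      is_HomLie_ideal br alpha (strong_upper_level mu t))).
Proof.
move=> [_ _ _ skew _] _; split.
- move=> [Hadd Hsc Hbr Hal] t _ [x0 Hx0]; rewrite /strong_upper_level in Hx0 *.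
  split; [split| |].
  + rewrite -(scale0r x0); exact: lt_le_trans Hx0 (Hsc _ _).
  + move=> x y Hx Hy; apply: lt_le_trans (Hadd x y).
    by rewrite lt_min Hx Hy.
  + move=> c x Hx; exact: lt_le_trans Hx (Hsc _ _).
  + move=> x Hx; exact: lt_le_trans Hx (Hal _).
  + move=> x y Hx; apply: lt_le_trans (Hbr x y).
    by rewrite lt_max Hx.
- move=> H; split.
  + move=> x y; rewrite leNgt; apply/negP => Hlt.
    have m1 : Num.min (mu x) (mu y) <= mu x by rewrite ge_min lexx.
    have m2 : Num.min (mu x) (mu y) <= mu y by rewrite ge_min lexx orbT.
    have [[_ Ha _] _ _] := H (mu (x + y)) (ex_intro _ _ erefl)
      (ex_intro _ x (lt_le_trans Hlt m1)).
    have := Ha x y (lt_le_trans Hlt m1) (lt_le_trans Hlt m2).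
    by rewrite /strong_upper_level ltxx.
  + move=> c x; rewrite leNgt; apply/negP => Hlt.
    have [[_ _ Hs] _ _] := H (mu (c *: x)) (ex_intro _ _ erefl) (ex_intro _ x Hlt).
    by have := Hs c x Hlt; rewrite /strong_upper_level ltxx.
  + move=> x y; rewrite ge_max; apply/andP; split; rewrite leNgt; apply/negP => Hlt.
    * have [_ _ Hb] := H (mu (br x y)) (ex_intro _ _ erefl) (ex_intro _ x Hlt).
      by have := Hb x y Hlt; rewrite /strong_upper_level ltxx.
    * have [[_ _ Hs] _ Hb] := H (mu (br x y)) (ex_intro _ _ erefl) (ex_intro _ y Hlt).
      have := Hs (-1) _ (Hb y x Hlt).
      by rewrite scaleN1r -skew /strong_upper_level ltxx.
  + move=> x; rewrite leNgt; apply/negP => Hlt.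
    have [_ Ha _] := H (mu (alpha x)) (ex_intro _ _ erefl) (ex_intro _ x Hlt).
    by have := Ha x Hlt; rewrite /strong_upper_level ltxx.
Qed.
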